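(* Let $\mathcal{X}_1,\mathcal{X}_2$ be non-empty sets, $\mathcal{B}_1\subseteq\mathcal{P}(\mathcal{X}_1)\setminus\{\emptyset\}$, $\mathcal{B}_2\subseteq\mathcal{P}(\mathcal{X}_2)\setminus\{\emptyset\}$ (arbitrary, possibly empty), and for $i\in\{1,2\}$ let $\underline{P}_i$ be a coherent conditional lower prevision on $\mathcal{C}_i\subseteq\mathcal{C}(\mathcal{X}_i)$ with natural extension $\underline{E}_i$ to $\mathcal{C}(\mathcal{X}_i)$. Then for any $f\in\mathcal{G}(\mathcal{X}_1)$ and $h\in\mathcal{G}(\mathcal{X}_2)$, $$(\underline{P}_1\otimes\underline{P}_2)(f+h)=\underline{E}_1(f)+\underline{E}_2(h).$$
   Context: Gambles on a non-empty set $\mathcal{X}$ are bounded real functions; $\mathcal{G}(\mathcal{X})$ is the set of gambles, $\mathcal{G}_{>0}(\mathcal{X})$ the non-negative non-zero gambles, $\mathbb{I}_A$ the indicator of $A$. For $\mathcal{A}\subseteq\mathcal{G}(\mathcal{X})$: $\mathrm{posi}(\mathcal{A}):=\{\sum_{i=1}^n\lambda_if_i\colon n\in\mathbb{N},\lambda_i>0,f_i\in\mathcal{A}\}$, $\mathcal{E}(\mathcal{A}):=\mathrm{posi}(\mathcal{A}\cup\mathcal{G}_{>0}(\mathcal{X}))$. A coherent set of desirable gambles $\mathcal{D}\subseteq\mathcal{G}(\mathcal{X})$ satisfies: (D1) $f\geq0,f\neq0\Rightarrow f\in\mathcal{D}$; (D2) $f\in\mathcal{D},\lambda>0\Rightarrow\lambda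 f\in\mathcal{D}$; (D3) $f,g\in\mathcal{D}\Rightarrow f+g\in\mathcal{D}$; (D4) $f\leq0\Rightarrow f\notin\mathcal{D}$. $\mathcal{C}(\mathcal{X}):=\mathcal{G}(\mathcal{X})\times(\mathcal{P}(\mathcal{X})\setminus\{\emptyset\})$; a conditional lower prevision on $\mathcal{C}\subseteq\mathcal{C}(\mathcal{X})$ is a map $(f,B)\mapsto\underline{P}(f\vert B)\in\mathbb{R}\cup\{\pm\infty\}$. For $\mathcal{D}\subseteq\mathcal{G}(\mathcal{X})$, $\underline{P}_{\mathcal{D}}(f\vert B):=\sup\{\mu\in\mathbb{R}\colon[f-\mu]\mathbb{I}_B\in\mathcal{D}\}$. $\underline{P}$ is coherent if $\underline{P}=\underline{P}_{\mathcal{D}}$ on its domain for some coherent set of desirable gambles $\mathcal{D}$. For coherent $\underline{P}$ on $\mathcal{C}$, $\mathcal{E}(\underline{P}):=\mathcal{E}(\{[f-\mu]\mathbb{I}_B\colon(f,B)\in\mathcal{C},\mu<\underline{P}(f\vert B)\})$ and its natural extension is $\underline{E}(f\vert B):=\underline{P}_{\mathcal{E}(\underline{P})}(f\vert B)$ for all $(f,B)\in\mathcal{C}(\mathcal{X})$. Unconditional notation: $\underline{P}(f):=\underline{P}(f\vert\mathcal{X})$. Gambles on $\mathcal{X}_i$ are identified with their cylindrical extensions to $\mathcal{X}_1\times\mathcal{X}_2$, events $B\subseteq\mathcal{X}_1$ with $B\times\mathcal{X}_2$ (similarly for $\mathcal{X}_2$). For coherent sets of desirable gambles $\mathcal{D}_1,\mathcal{D}_2$: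 $\mathcal{D}_1\otimes\mathcal{D}_2:=\mathcal{E}(\mathcal{A}_{1\to2}\cup\mathcal{A}_{2\to1})$, $\mathcal{A}_{1\to2}:=\{f_2(X_2)\mathbb{I}_{B_1}(X_1)\colon f_2\in\mathcal{D}_2,B_1\in\mathcal{B}_1\cup\{\mathcal{X}_1\}\}$, $\mathcal{A}_{2\to1}:=\{f_1(X_1)\mathbb{I}_{B_2}(X_2)\colon f_1\in\mathcal{D}_1,B_2\in\mathcal{B}_2\cup\{\mathcal{X}_2\}\}$. Then $(\underline{P}_1\otimes\underline{P}_2)(f\vert B):=\underline{P}_{\mathcal{D}}(f\vert B)$ for $(f,B)\in\mathcal{C}(\mathcal{X}_1\times\mathcal{X}_2)$ with $\mathcal{D}=\mathcal{E}(\underline{P}_1)\otimes\mathcal{E}(\underline{P}_2)$. *)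

(* Defs.v *)
From Stdlib Require Import Reals ClassicalEpsilon.
From Coquelicot Require Import Rbar Lub.
Open Scope R_scope.

Definition is_gamble {X : Type} (f : X -> R) : Prop :=
  exists M : R, forall x, Rabs (f x) <= M.

Definition indic {X : Type} (B : X -> Prop) (x : X) : R :=
  if excluded_middle_informative (B x) then 1 else 0.

Definition fullset {X : Type} : X -> Prop := fun _ => True.

Definition Gpos {X : Type} (f : X -> R) : Prop :=
  is_gamble f /\ (forall x, 0 <= f x) /\ (exists x, f x <> 0).

Definition posi {X : Type} (A : (X -> R) -> Prop) (g : X -> R) : Prop :=
  exists (n : nat) (lam : nat -> R) (fs : nat -> X -> R),
    (forall i, (i <= n)%nat -> 0 < lam i /\ A (fs i)) /\
    (forall x, g x = sum_f_R0 (fun i => lam i * fs i x) n).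

Definition Ext {X : Type} (A : (X -> R) -> Prop) : (X -> R) -> Prop :=
  posi (fun f => A f \/ Gpos f).

Definition coherent_D {X : Type} (D : (X -> R) -> Prop) : Prop :=
  (forall f, D f -> is_gamble f) /\
  (forall f, is_gamble f -> (forall x, 0 <= f x) -> (exists x, f x <> 0) -> D f) /\
  (forall f lam, D f -> 0 < lam -> D (fun x => lam * f x)) /\
  (forall f g, D f -> D g -> D (fun x => f x + g x)) /\
  (forall f, (forall x, f x <= 0) -> ~ D f).

(* P_D(f|B) = sup { mu in R : [f - mu] I_B in D } (sup of empty set = -oo) *)
Definition lowprev_of {X : Type} (D : (X -> R) -> Prop) (f : X -> R) (B : X -> Prop)
  : Rbar :=
  Lub_Rbar (fun mu : R => D (fun x => (f x - mu) * indic B x)).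

Definition domain_ok {X : Type} (C : (X -> R) -> (X -> Prop) -> Prop) : Prop :=
  forall f B, C f B -> is_gamble f /\ exists x, B x.

Definition coherent_P {X : Type} (C : (X -> R) -> (X -> Prop) -> Prop)
  (P : (X -> R) -> (X -> Prop) -> Rbar) : Prop :=
  exists D, coherent_D D /\ forall f B, C f B -> P f B = lowprev_of D f B.

Definition ExtP {X : Type} (C : (X -> R) -> (X -> Prop) -> Prop)
  (P : (X -> R) -> (X -> Prop) -> Rbar) : (X -> R) -> Prop :=
  Ext (fun g => exists f B (mu : R),
         C f B /\ Rbar_lt (Finite mu) (P f B) /\
         g = (fun x => (f x - mu) * indic B x)).

Definition natext {X : Type} (C : (X -> R) -> (X -> Prop) -> Prop)
  (P : (X -> R) -> (X -> Prop) -> Rbar) (f : X -> R) (B : X -> Prop) : Rbar :=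
  lowprev_of (ExtP C P) f B.

Definition A12 {X1 X2 : Type} (Bs1 : (X1 -> Prop) -> Prop)
  (D2 : (X2 -> R) -> Prop) : (X1 * X2 -> R) -> Prop :=
  fun g => exists f2 B1, D2 f2 /\ (Bs1 B1 \/ (forall x, B1 x)) /\
    g = (fun z => f2 (snd z) * indic B1 (fst z)).

Definition A21 {X1 X2 : Type} (Bs2 : (X2 -> Prop) -> Prop)
  (D1 : (X1 -> R) -> Prop) : (X1 * X2 -> R) -> Prop :=
  fun g => exists f1 B2, D1 f1 /\ (Bs2 B2 \/ (forall x, B2 x)) /\
    g = (fun z => f1 (fst z) * indic B2 (snd z)).

Definition Dprod {X1 X2 : Type} (Bs1 : (X1 -> Prop) -> Prop)
  (Bs2 : (X2 -> Prop) -> Prop) (D1 : (X1 -> R) -> Prop) (D2 : (X2 -> R) -> Prop)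
  : (X1 * X2 -> R) -> Prop :=
  Ext (fun g => A12 Bs1 D2 g \/ A21 Bs2 D1 g).

Definition prodP {X1 X2 : Type} (Bs1 : (X1 -> Prop) -> Prop)
  (Bs2 : (X2 -> Prop) -> Prop)
  (C1 : (X1 -> R) -> (X1 -> Prop) -> Prop) (P1 : (X1 -> R) -> (X1 -> Prop) -> Rbar)
  (C2 : (X2 -> R) -> (X2 -> Prop) -> Prop) (P2 : (X2 -> R) -> (X2 -> Prop) -> Rbar)
  (f : X1 * X2 -> R) (B : X1 * X2 -> Prop) : Rbar :=
  lowprev_of (Dprod Bs1 Bs2 (ExtP C1 P1) (ExtP C2 P2)) f B.

(* Main.v *)
Require Import Defs.
From Stdlib Require Import Reals.
From Coquelicot Require Import Rbar.
From Stdlib Require Import Lra Lia List Classical ClassicalEpsilon FunctionalExtensionality.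
From Coquelicot Require Import Lub.
Open Scope R_scope.

Lemma sumf_ext (An Bn : nat -> R) N :
  (forall i, (i <= N)%nat -> An i = Bn i) -> sum_f_R0 An N = sum_f_R0 Bn N.
Proof.
  induction N; intros H; simpl.
  - apply H; lia.
  - rewrite IHN by (intros; apply H; lia). rewrite (H (S N)) by lia. reflexivity.
Qed.

Lemma sumf_lin (A B : nat -> R) a b N :
  sum_f_R0 (fun i => a * A i + b * B i) N = a * sum_f_R0 A N + b * sum_f_R0 B N.
Proof. induction N; simpl; [ring| rewrite IHN; ring]. Qed.

Lemma list_max_ex (l : list R) : l <> nil -> exists M, In M l /\ forall x, In x l -> x <= M.
Proof.
  induction l as [|a l IH]; intros Hn; [congruence|].
  destruct l as [|b l'].
  - exists a; split; [left; auto|]. intros x [<-|[]]; lra.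
  - destruct IH as [M [HM1 HM2]]; [discriminate|].
    destruct (Rle_dec a M).
    + exists M; split; [right; auto|]. intros x [<-|Hx]; [lra|auto].
    + exists a; split; [left; auto|]. intros x [<-|Hx]; [lra|]. specialize (HM2 x Hx); lra.
Qed.

Lemma list_min_ex (l : list R) : l <> nil -> exists M, In M l /\ forall x, In x l -> M <= x.
Proof.
  induction l as [|a l IH]; intros Hn; [congruence|].
  destruct l as [|b l'].
  - exists a; split; [left; auto|]. intros x [<-|[]]; lra.
  - destruct IH as [M [HM1 HM2]]; [discriminate|].
    destruct (Rle_dec M a).
    + exists M; split; [right; auto|]. intros x [<-|Hx]; [lra|auto].
    + exists a; split; [left; auto|]. intros x [<-|Hx]; [lra|]. specialize (HM2 x Hx); lra.
Qed.

Lemma between (lo up : list R) : lo <> nil ->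
  (forall l u, In l lo -> In u up -> l < u) ->
  exists t, (forall l, In l lo -> l < t) /\ (forall u, In u up -> t < u).
Proof.
  intros Hlo H. destruct (list_max_ex lo Hlo) as [M [HM1 HM2]].
  destruct up as [|u0 up'].
  - exists (M+1). split; [intros l Hl; specialize (HM2 l Hl); lra| intros u []].
  - destruct (list_min_ex (u0::up')) as [m [Hm1 Hm2]]; [discriminate|].
    pose proof (H M m HM1 Hm1).
    exists ((M+m)/2). split.
    + intros l Hl; specialize (HM2 l Hl); lra.
    + intros u Hu; specialize (Hm2 u Hu); lra.
Qed.

Definition vsum (k w : nat -> R) m := sum_f_R0 (fun s => k s * w s) m.

Definition combo m (p n : nat -> R) : nat -> R :=
  fun s => p (S m) * n s + (- n (S m)) * p s.

Definition posb (x : R) : bool := if Rle_dec 0 x then true else false.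

Lemma alt : forall m (K : (nat -> R) -> Prop) (L : list (nat -> R)),
  (forall a b w w', 0 <= a -> 0 < b -> K w -> K w' -> K (fun s => a * w s + b * w' s)) ->
  (forall w, In w L -> K w) -> L <> nil ->
  (exists w, K w /\ forall s, (s <= m)%nat -> 0 <= w s) \/
  (exists k : nat -> R, (forall s, (s <= m)%nat -> 0 <= k s) /\
     forall w, In w L -> vsum k w m < 0).
Proof.
  induction m as [|m IH]; intros K L HK HL Hne.
  - destruct (classic (exists w, In w L /\ 0 <= w 0%nat)) as [[w [Hw1 Hw2]]|Hn].
    + left. exists w; split; [auto|]. intros s Hs. replace s with 0%nat by lia. auto.
    + right. exists (fun _ => 1). split; [intros; lra|].
      intros w Hw. unfold vsum; simpl.
      destruct (Rle_dec 0 (w 0%nat)) as [h|h]; [exfalso; apply Hn; eauto|lra].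
  - set (ZP := filter (fun w => posb (w (S m))) L).
    set (Nl := filter (fun w => negb (posb (w (S m)))) L).
    set (Pl := filter (fun w => if Rlt_dec 0 (w (S m)) then true else false) L).
    set (L' := ZP ++ flat_map (fun p => map (fun n => combo m p n) Nl) ZP).
    assert (HZP : forall w, In w ZP <-> In w L /\ 0 <= w (S m)).
    { intro w; unfold ZP; rewrite filter_In; unfold posb.
      destruct (Rle_dec 0 (w (S m))); intuition congruence. }
    assert (HN : forall w, In w Nl <-> In w L /\ w (S m) < 0).
    { intro w; unfold Nl; rewrite filter_In; unfold posb.
      destruct (Rle_dec 0 (w (S m))); simpl; split; intros; try lra; intuition. }
    assert (HP : forall w, In w Pl <-> In w L /\ 0 < w (S m)).
    { intro w; unfold Pl; rewrite filter_In.
      destruct (Rlt_dec 0 (w (S m))); simpl; split; intros; try lra; intuition. }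
    assert (HL' : forall w, In w L' <-> In w ZP \/ exists p n, In p ZP /\ In n Nl /\ w = combo m p n).
    { intro w; unfold L'; rewrite in_app_iff, in_flat_map. split.
      - intros [h|[p [hp hn]]]; [left; auto|]. rewrite in_map_iff in hn.
        destruct hn as [n [<- hn]]. right; eauto.
      - intros [h|[p [n [hp [hn ->]]]]]; [left; auto|]. right. exists p; split; auto.
        apply in_map; auto. }
    destruct L' as [|w0 L0] eqn:EL'.
    +
      right. exists (fun s => if Nat.eqb s (S m) then 1 else 0). split.
      { intros s _. destruct (Nat.eqb s (S m)); lra. }
      intros w Hw. unfold vsum; simpl.
      rewrite sum_eq_R0.
      2:{ intros s Hs. destruct (Nat.eqb_spec s (S m)); [lia|ring]. }
      rewrite Nat.eqb_refl.
      destruct (Rle_dec 0 (w (S m))) as [h|h].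
      * exfalso. assert (In w (@nil (nat -> R))) as []. apply (proj2 (HL' w)). left. apply HZP; auto.
      * lra.
    + rewrite <- EL' in HL'.
      set (K' := fun w => K w /\ 0 <= w (S m)).
      destruct (IH K' (w0 :: L0)) as [[w [[Hw1 Hw2] Hw3]]|[k [Hk1 Hk2]]].
      * intros a b w w' ha hb [h1 h2] [h3 h4]. split; [apply HK; auto|].
        apply Rplus_le_le_0_compat; apply Rmult_le_pos; lra.
      * intros w Hw. rewrite <- EL' in Hw. apply HL' in Hw.
        destruct Hw as [Hw|[p [n [hp [hn ->]]]]].
        -- apply HZP in Hw. split; [apply HL|]; tauto.
        -- apply HZP in hp; apply HN in hn. split.
           ++ unfold combo. apply HK; try lra; apply HL; tauto.
           ++ unfold combo. apply Req_le. ring.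
      * discriminate.
      * left. exists w. split; auto. intros s Hs.
        destruct (Nat.eq_dec s (S m)) as [->|]; auto. apply Hw3; lia.
      * rewrite <- EL' in Hk2.
        set (A := fun w => vsum k w m).
        destruct (between (0 :: map (fun n => A n / (- n (S m))) Nl)
                          (map (fun p => - A p / p (S m)) Pl)) as [t [Ht1 Ht2]].
        { discriminate. }
        { intros l u Hl Hu. rewrite in_map_iff in Hu. destruct Hu as [p [<- Hp]].
          apply HP in Hp. destruct Hp as [Hp1 Hp2].
          assert (HAp : A p < 0). { apply Hk2, HL'. left. apply HZP. split; auto; lra. }
          destruct Hl as [<-|Hl].
          - apply Rdiv_lt_0_compat; lra.
          - rewrite in_map_iff in Hl. destruct Hl as [n [<- Hn]].
            assert (Hn' := Hn). apply HN in Hn'.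
            assert (Hc : A (combo m p n) < 0).
            { apply Hk2, HL'. right. exists p, n. split; [apply HZP; split; [tauto|lra]|]. auto. }
            unfold A, vsum, combo in Hc.
            rewrite (sumf_ext _ (fun s => p (S m) * (k s * n s) + (- n (S m)) * (k s * p s))) in Hc
              by (intros; ring).
            rewrite sumf_lin in Hc. fold (vsum k n m) (vsum k p m) in Hc. fold (A n) (A p) in Hc.
            apply (Rmult_lt_reg_r (p (S m) * (- n (S m)))).
            { apply Rmult_lt_0_compat; lra. }
            unfold Rdiv. field_simplify; try lra. }
        right. exists (fun s => if Nat.eqb s (S m) then t else k s). split.
        { intros s Hs. destruct (Nat.eqb_spec s (S m)).
          - specialize (Ht1 0 (or_introl eq_refl)); lra.
          - apply Hk1; lia. }
        intros w Hw. unfold vsum. simpl. rewrite Nat.eqb_refl.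
        rewrite (sumf_ext _ (fun s => k s * w s)).
        2:{ intros i Hi. destruct (Nat.eqb_spec i (S m)); [lia|auto]. }
        fold (vsum k w m). fold (A w).
        destruct (Rle_dec 0 (w (S m))) as [h|h].
        -- assert (HAw : A w < 0). { apply Hk2, HL'. left. apply HZP; auto. }
           destruct (Rlt_dec 0 (w (S m))) as [h'|h'].
           ++ assert (Hu : t < - A w / w (S m)).
              { apply Ht2. apply (in_map (fun p => - A p / p (S m))). apply HP; auto. }
              apply (Rmult_lt_compat_r (w (S m))) in Hu; auto.
              unfold Rdiv in Hu. rewrite Rmult_assoc, Rinv_l in Hu by lra. lra.
           ++ replace (w (S m)) with 0 by lra. lra.
        -- assert (Hl : A w / - w (S m) < t).
           { apply Ht1. right. apply (in_map (fun n => A n / - n (S m))). apply HN; split; auto; lra. }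
           apply (Rmult_lt_compat_r (- w (S m))) in Hl; [|lra].
           unfold Rdiv in Hl. rewrite Rmult_assoc, Rinv_l in Hl by lra. lra.
Qed.

Lemma indic_full {X} (x : X) : indic fullset x = 1.
Proof. unfold indic; destruct excluded_middle_informative as [_|n]; [auto|exfalso; apply n; exact I]. Qed.

Lemma indic_01 {X} (B : X -> Prop) x : indic B x = 0 \/ indic B x = 1.
Proof. unfold indic; destruct excluded_middle_informative; auto. Qed.

Lemma indic_ge0 {X} (B : X -> Prop) x : 0 <= indic B x.
Proof. destruct (indic_01 B x) as [->| ->]; lra. Qed.

Lemma indic_true {X} (B : X -> Prop) x : B x -> indic B x = 1.
Proof. unfold indic; destruct excluded_middle_informative; tauto. Qed.

Lemma indic_iff {X Y} (B : X -> Prop) (B' : Y -> Prop) x y : (B x <-> B' y) -> indic B x = indic B' y.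
Proof. unfold indic; do 2 destruct excluded_middle_informative; tauto. Qed.

Lemma gamble_add {X} (g g' : X -> R) : is_gamble g -> is_gamble g' -> is_gamble (fun x => g x + g' x).
Proof. intros [M HM] [M' HM']. exists (M+M'). intro x. eapply Rle_trans; [apply Rabs_triang|].
  specialize (HM x); specialize (HM' x); lra. Qed.

Lemma gamble_scale {X} (g : X -> R) a : is_gamble g -> is_gamble (fun x => a * g x).
Proof. intros [M HM]. exists (Rabs a * M). intro x. rewrite Rabs_mult.
  apply Rmult_le_compat_l; [apply Rabs_pos|auto]. Qed.

Lemma gamble_const {X} (c : R) : is_gamble (fun _ : X => c).
Proof. exists (Rabs c). intros; lra. Qed.

Lemma gamble_indic {X} (g : X -> R) B : is_gamble g -> is_gamble (fun x => g x * indic B x).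
Proof. intros [M HM]. exists M. intro x. rewrite Rabs_mult.
  destruct (indic_01 B x) as [->| ->]; [rewrite Rabs_R0|rewrite Rabs_R1]; specialize (HM x);
  try lra. pose proof (Rabs_pos (g x)); lra. Qed.

Lemma gamble_ext {X} (g g' : X -> R) : is_gamble g -> (forall x, g x = g' x) -> is_gamble g'.
Proof. intros [M HM] E. exists M. intro x. rewrite <- E. auto. Qed.

Record cone_ok {X} (D : (X -> R) -> Prop) : Prop := {
  c_gamble : forall g, D g -> is_gamble g;
  c_add : forall g g', D g -> D g' -> D (fun x => g x + g' x);
  c_scale : forall g a, D g -> 0 < a -> D (fun x => a * g x);
  c_pos : forall g, Gpos g -> D g;
  c_np : forall g, (forall x, g x <= 0) -> ~ D g }.

Lemma D_ext {X} (D : (X -> R) -> Prop) g g' : D g -> (forall x, g x = g' x) -> D g'.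
Proof. intros H E. replace g' with g; auto. apply functional_extensionality; auto. Qed.

Definition D0 {X} (D : (X -> R) -> Prop) (g : X -> R) := D g \/ forall x, g x = 0.

Section Cone.
Context {X : Type} (D : (X -> R) -> Prop) (HD : cone_ok D).

Lemma D0_ext g g' : D0 D g -> (forall x, g x = g' x) -> D0 D g'.
Proof. intros [H|H] E; [left; eapply D_ext; eauto|right; intro x; rewrite <- E; auto]. Qed.

Lemma D0_gamble g : D0 D g -> is_gamble g.
Proof. intros [H|H]; [eapply c_gamble; eauto|]. apply (gamble_ext (fun _ => 0)); [apply gamble_const|auto]. Qed.

Lemma D0_scale g a : D0 D g -> 0 <= a -> D0 D (fun x => a * g x).
Proof. intros Hg Ha. destruct (Req_dec a 0) as [->|Ha'].
  - right; intros; ring.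
  - destruct Hg as [Hg|Hg]; [left; apply c_scale; auto; lra|right; intros; rewrite Hg; ring]. Qed.

Lemma D0_add g g' : D0 D g -> D0 D g' -> D0 D (fun x => g x + g' x).
Proof. intros [H|H] [H'|H'].
  - left; apply c_add; auto.
  - left; eapply D_ext; [exact H|]. intros; rewrite H'; ring.
  - left; eapply D_ext; [exact H'|]. intros; rewrite H; ring.
  - right; intros; rewrite H, H'; ring. Qed.

Lemma D0_zero : D0 D (fun _ => 0).
Proof. right; auto. Qed.

Lemma D0_sum (phi : nat -> X -> R) (k : nat -> R) m :
  (forall s, (s <= m)%nat -> 0 <= k s /\ D0 D (phi s)) ->
  D0 D (fun x => sum_f_R0 (fun s => k s * phi s x) m).
Proof.
  induction m; intros H; simpl.
  - apply D0_scale; apply H; lia.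
  - apply (D0_add (fun x => sum_f_R0 (fun s => k s * phi s x) m) (fun x => k (S m) * phi (S m) x)).
    + apply IHm; intros; apply H; lia.
    + apply D0_scale; apply H; lia.
Qed.

Lemma D_upper (x0 : X) G Phi alpha eps : is_gamble G -> D0 D Phi -> 0 < alpha -> 0 < eps ->
  (forall x, Phi x <= alpha * G x) -> D (fun x => G x + eps).
Proof.
  intros HG HPhi Ha He Hle.
  set (Gp := fun x => alpha * G x - Phi x + alpha * eps).
  assert (HGp : Gpos Gp).
  { split; [|split].
    - unfold Gp. apply gamble_add; [|apply gamble_const].
      apply (gamble_ext (fun x => alpha * G x + (-1) * Phi x)); [|intros; ring].
      apply gamble_add; apply gamble_scale; auto. apply D0_gamble; auto.
    - intro x; unfold Gp; specialize (Hle x). pose proof (Rmult_lt_0_compat _ _ Ha He). lra.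
    - exists x0; unfold Gp; specialize (Hle x0). pose proof (Rmult_lt_0_compat _ _ Ha He). lra. }
  assert (H1 : D (fun x => alpha * (G x + eps))).
  { destruct HPhi as [HPhi|HPhi].
    - eapply D_ext; [apply (c_add _ HD _ _ HPhi (c_pos _ HD _ HGp))|]. intros; unfold Gp; ring.
    - eapply D_ext; [apply (c_pos _ HD _ HGp)|]. intros; unfold Gp; rewrite HPhi; ring. }
  eapply D_ext; [apply (c_scale _ HD _ (/alpha) H1); apply Rinv_0_lt_compat; auto|].
  intros; cbv beta; field; lra.
Qed.

Lemma D_mono g g' : D g -> is_gamble g' -> (forall x, g x <= g' x) -> D g'.
Proof.
  intros Hg Hg' Hle. destruct (classic (exists x, g' x - g x <> 0)) as [Hn|Hn].
  - eapply D_ext; [apply (c_add _ HD g (fun x => g' x - g x)); auto|intros; cbv beta; ring].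
    apply c_pos; auto. split; [|split; auto].
    + apply (gamble_ext (fun x => g' x + (-1) * g x)); [|intros; ring].
      apply gamble_add; auto; apply gamble_scale; eapply c_gamble; eauto.
    + intros x; specialize (Hle x); lra.
  - eapply D_ext; [exact Hg|]. intros x. destruct (Req_dec (g' x - g x) 0); [lra|].
    exfalso; apply Hn; eauto.
Qed.

End Cone.

Lemma posi_add {X} (A : (X -> R) -> Prop) g g' : posi A g -> posi A g' -> posi A (fun x => g x + g' x).
Proof.
  intros [n [lam [fs [H1 H2]]]] [n' [lam' [fs' [H1' H2']]]].
  exists (n + S n')%nat, (fun i => if Nat.leb i n then lam i else lam' (i - S n)%nat),
    (fun i => if Nat.leb i n then fs i else fs' (i - S n)%nat).
  split.
  - intros i Hi. destruct (Nat.leb_spec i n); [apply H1; auto|apply H1'; lia].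
  - intros x. rewrite (tech2 _ n (n + S n')) by lia.
    replace (n + S n' - S n)%nat with n' by lia.
    rewrite H2, H2'. f_equal.
    + apply sumf_ext. intros i Hi. destruct (Nat.leb_spec i n); [auto|lia].
    + apply sumf_ext. intros i Hi. destruct (Nat.leb_spec (S n + i) n); [lia|].
      replace (S n + i - S n)%nat with i by lia. auto.
Qed.

Lemma posi_scale {X} (A : (X -> R) -> Prop) g a : posi A g -> 0 < a -> posi A (fun x => a * g x).
Proof.
  intros [n [lam [fs [H1 H2]]]] Ha. exists n, (fun i => a * lam i), fs. split.
  - intros i Hi. destruct (H1 i Hi). split; auto. apply Rmult_lt_0_compat; auto.
  - intros x. rewrite H2, scal_sum. apply sumf_ext. intros; ring.
Qed.

Lemma posi_base {X} (A : (X -> R) -> Prop) g : A g -> posi A g.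
Proof. intros H. exists 0%nat, (fun _ => 1), (fun _ => g). split.
  - intros; split; auto; lra.
  - intros; simpl; ring. Qed.

Lemma posi_sub {X} (A : (X -> R) -> Prop) (D : (X -> R) -> Prop) :
  (forall g g', D g -> D g' -> D (fun x => g x + g' x)) ->
  (forall g a, D g -> 0 < a -> D (fun x => a * g x)) ->
  (forall g, A g -> D g) -> forall g, posi A g -> D g.
Proof.
  intros Hadd Hsc HA g [n [lam [fs [H1 H2]]]].
  apply (D_ext D (fun x => sum_f_R0 (fun i => lam i * fs i x) n)); [|intros; auto].
  clear H2. induction n.
  - simpl. apply Hsc; [apply HA|]; apply H1; auto.
  - simpl. apply (Hadd (fun x => sum_f_R0 (fun i => lam i * fs i x) n) (fun x => lam (S n) * fs (S n) x)).
    + apply IHn; intros; apply H1; lia.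
    + apply Hsc; [apply HA|]; apply H1; lia.
Qed.

Lemma Ext_cone {X} (A : (X -> R) -> Prop) (D : (X -> R) -> Prop) :
  coherent_D D -> (forall g, A g -> D g) -> (forall g, A g -> is_gamble g) -> cone_ok (Ext A).
Proof.
  intros [HD1 [HD2 [HD3 [HD4 HD5]]]] HAD HAg.
  assert (Hsub : forall g, Ext A g -> D g).
  { apply posi_sub; [exact HD4|exact HD3|]. intros g [Hg|[Hg1 [Hg2 [x Hg3]]]]; [auto|].
    apply HD2; eauto. }
  constructor.
  - intros g Hg. apply HD1, Hsub, Hg.
  - intros; apply posi_add; auto.
  - intros; apply posi_scale; auto.
  - intros g Hg. apply posi_base. right; auto.
  - intros g Hg H. apply (HD5 g Hg). apply Hsub; auto.
Qed.

Lemma ExtP_cone {X} (C : (X -> R) -> (X -> Prop) -> Prop) P :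
  domain_ok C -> coherent_P C P -> cone_ok (ExtP C P).
Proof.
  intros HC [D [HD HP]].
  pose proof HD as [HD1 [HD2 [HD3 [HD4 HD5]]]].
  apply (Ext_cone _ D HD).
  - intros g [f [B [mu [HfB [Hlt ->]]]]].
    rewrite (HP f B HfB) in Hlt. unfold lowprev_of in Hlt.
    destruct (HC f B HfB) as [Hf [b Hb]].
    destruct (classic (exists mu', mu < mu' /\ D (fun x => (f x - mu') * indic B x))) as
      [[mu' [Hm1 Hm2]]|Hn].
    + apply (D_ext D (fun x => (f x - mu') * indic B x + (mu' - mu) * indic B x)); [|intros; ring].
      apply HD4; auto. apply HD2.
      * apply (gamble_ext (fun x => (mu' - mu) * indic B x)); [|auto].
        apply gamble_scale. apply (gamble_ext (fun x => 1 * indic B x)); [|intros; ring].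
        apply gamble_indic, gamble_const.
      * intros x; apply Rmult_le_pos; [lra|apply indic_ge0].
      * exists b. rewrite indic_true; auto. lra.
    + exfalso. destruct (Lub_Rbar_correct (fun mu0 => D (fun x => (f x - mu0) * indic B x))) as [_ Hl].
      assert (Hub : is_ub_Rbar (fun mu0 => D (fun x => (f x - mu0) * indic B x)) (Finite mu)).
      { intros y Hy. simpl. destruct (Rle_dec y mu); auto. exfalso; apply Hn; exists y; split; auto; lra. }
      specialize (Hl _ Hub). eapply Rbar_lt_not_le; eauto.
  - intros g [f [B [mu [HfB [Hlt ->]]]]]. apply gamble_indic.
    apply (gamble_ext (fun x => f x + (-mu))); [|intros; ring].
    apply gamble_add; [apply (HC f B HfB)|apply gamble_const].
Qed.

Fixpoint sumL {A} (l : list A) (phi : A -> R) : R :=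
  match l with nil => 0 | a :: l' => phi a + sumL l' phi end.

Lemma sumL_app {A} (l l' : list A) phi : sumL (l ++ l') phi = sumL l phi + sumL l' phi.
Proof. induction l; simpl; [ring|rewrite IHl; ring]. Qed.

Lemma sumL_ext_in {A} (l : list A) phi psi : (forall a, In a l -> phi a = psi a) -> sumL l phi = sumL l psi.
Proof. induction l; simpl; intros H; auto. rewrite H, IHl; auto. Qed.

Lemma decomp {X1 X2} Bs1 Bs2 (D1 : (X1 -> R) -> Prop) (D2 : (X2 -> R) -> Prop)
  (Hs1 : forall g a, D1 g -> 0 < a -> D1 (fun x => a * g x))
  (Hs2 : forall g a, D2 g -> 0 < a -> D2 (fun x => a * g x)) g :
  Dprod Bs1 Bs2 D1 D2 g ->
  exists (LU : list ((X2 -> R) * (X1 -> Prop))) (LV : list ((X1 -> R) * (X2 -> Prop))),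
    (forall p, In p LU -> D2 (fst p)) /\ (forall p, In p LV -> D1 (fst p)) /\
    forall z, sumL LU (fun p => fst p (snd z) * indic (snd p) (fst z)) +
              sumL LV (fun p => fst p (fst z) * indic (snd p) (snd z)) <= g z.
Proof.
  intros [n [lam [fs [H1 H2]]]].
  cut (exists (LU : list ((X2 -> R) * (X1 -> Prop))) (LV : list ((X1 -> R) * (X2 -> Prop))),
    (forall p, In p LU -> D2 (fst p)) /\ (forall p, In p LV -> D1 (fst p)) /\
    forall z, sumL LU (fun p => fst p (snd z) * indic (snd p) (fst z)) +
              sumL LV (fun p => fst p (fst z) * indic (snd p) (snd z)) <=
              sum_f_R0 (fun i => lam i * fs i z) n).
  { intros [LU [LV [h1 [h2 h3]]]]. exists LU, LV; split; [|split]; auto. intros z; rewrite H2; auto. }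
  clear H2.
  assert (Hone : forall i, (i <= n)%nat -> exists (LU : list ((X2 -> R) * (X1 -> Prop))) (LV : list ((X1 -> R) * (X2 -> Prop))),
    (forall p, In p LU -> D2 (fst p)) /\ (forall p, In p LV -> D1 (fst p)) /\
    forall z, sumL LU (fun p => fst p (snd z) * indic (snd p) (fst z)) +
              sumL LV (fun p => fst p (fst z) * indic (snd p) (snd z)) <= lam i * fs i z).
  { intros i Hi. destruct (H1 i Hi) as [Hl [[[f2 [B1 [Hf2 [_ Eg]]]]|[f1 [B2 [Hf1 [_ Eg]]]]]|Hg]].
    - exists ((fun y => lam i * f2 y, B1) :: nil), nil. split; [|split].
      + intros p [<-|[]]. simpl. apply Hs2; auto.
      + intros p [].
      + intros z. rewrite Eg. simpl. lra.
    - exists nil, ((fun y => lam i * f1 y, B2) :: nil). split; [|split].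
      + intros p [].
      + intros p [<-|[]]. simpl. apply Hs1; auto.
      + intros z. rewrite Eg. simpl. lra.
    - exists nil, nil. split; [|split]; try (intros p []).
      intros z. simpl. destruct Hg as [_ [Hg _]]. specialize (Hg z).
      pose proof (Rmult_le_pos _ _ (Rlt_le _ _ Hl) Hg). lra. }
  clear H1. induction n.
  - apply Hone; auto.
  - destruct IHn as [LU [LV [h1 [h2 h3]]]]; [intros; apply Hone; lia|].
    destruct (Hone (S n)) as [LU' [LV' [h1' [h2' h3']]]]; [lia|].
    exists (LU ++ LU'), (LV ++ LV'). split; [|split].
    + intros p Hp; apply in_app_iff in Hp; destruct Hp; auto.
    + intros p Hp; apply in_app_iff in Hp; destruct Hp; auto.
    + intros z. simpl. rewrite !sumL_app. specialize (h3 z). specialize (h3' z). lra.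
Qed.

Lemma reps {X} (x0 : X) (Es : list (X -> Prop)) :
  exists Rl : list X, forall x, exists r, In r Rl /\ forall E, In E Es -> (E x <-> E r).
Proof.
  induction Es as [|E Es IH].
  - exists (x0 :: nil). intros x. exists x0. split; [left; auto|]. intros E [].
  - destruct IH as [Rl HR].
    set (ch := fun (r : X) (b : Prop) =>
      epsilon (inhabits r) (fun y => (forall E', In E' Es -> (E' y <-> E' r)) /\ (E y <-> b))).
    exists (flat_map (fun r => ch r (E r) :: ch r (~ E r) :: nil) (Rl)).
    intros x. destruct (HR x) as [r [Hr1 Hr2]].
    destruct (classic (E x)) as [He|He].
    + assert (Hs := epsilon_spec (inhabits r) (fun y => (forall E', In E' Es -> (E' y <-> E' r)) /\ (E y <-> E r))).
      destruct (classic (E r)) as [Her|Her].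
      * exists (ch r (E r)). split.
        { apply in_flat_map. exists r; split; auto. left; auto. }
        destruct Hs as [Hs1 Hs2]. { exists r; split; tauto. }
        intros E' [<-|HE']; [fold (ch r (E r)) in Hs2; tauto|].
        fold (ch r (E r)) in Hs1. rewrite Hr2, Hs1; tauto.
      * assert (Hs' := epsilon_spec (inhabits r) (fun y => (forall E', In E' Es -> (E' y <-> E' r)) /\ (E y <-> ~ E r))).
        exists (ch r (~ E r)). split.
        { apply in_flat_map. exists r; split; auto. right; left; auto. }
        destruct Hs' as [Hs1 Hs2]. { exists x; split; [auto|tauto]. }
        fold (ch r (~ E r)) in Hs1, Hs2.
        intros E' [<-|HE']; [tauto|]. rewrite Hr2, Hs1; tauto.
    + destruct (classic (E r)) as [Her|Her].
      * assert (Hs' := epsilon_spec (inhabits r) (fun y => (forall E', In E' Es -> (E' y <-> E' r)) /\ (E y <-> ~ E r))).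
        exists (ch r (~ E r)). split.
        { apply in_flat_map. exists r; split; auto. right; left; auto. }
        destruct Hs' as [Hs1 Hs2]. { exists x; split; [auto|tauto]. }
        fold (ch r (~ E r)) in Hs1, Hs2.
        intros E' [<-|HE']; [tauto|]. rewrite Hr2, Hs1; tauto.
      * assert (Hs := epsilon_spec (inhabits r) (fun y => (forall E', In E' Es -> (E' y <-> E' r)) /\ (E y <-> E r))).
        exists (ch r (E r)). split.
        { apply in_flat_map. exists r; split; auto. left; auto. }
        destruct Hs as [Hs1 Hs2]. { exists r; split; tauto. }
        fold (ch r (E r)) in Hs1, Hs2.
        intros E' [<-|HE']; [tauto|]. rewrite Hr2, Hs1; tauto.
Qed.

Lemma sumL_D0 {X Y} (D : (X -> R) -> Prop) (HD : cone_ok D) (L : list ((X -> R) * (Y -> Prop))) (y : Y) :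
  (forall p, In p L -> D (fst p)) -> D0 D (fun a => sumL L (fun p => fst p a * indic (snd p) y)).
Proof.
  induction L as [|p L IH]; intros H; simpl.
  - right; intros; reflexivity.
  - apply (D0_add D HD (fun a => fst p a * indic (snd p) y) (fun a => sumL L (fun p => fst p a * indic (snd p) y))).
    + apply (D0_ext D (fun a => indic (snd p) y * fst p a)); [|intros; ring].
      apply D0_scale; auto; [left; apply H; left; auto|apply indic_ge0].
    + apply IH; intros; apply H; right; auto.
Qed.

Lemma sum_sub (k A : nat -> R) c m :
  sum_f_R0 (fun s => k s * (A s - c)) m = sum_f_R0 (fun s => k s * A s) m - c * sum_f_R0 k m.
Proof. induction m; simpl; [ring|rewrite IHm; ring]. Qed.

Lemma sum_nonneg (k : nat -> R) m : (forall s, (s <= m)%nat -> 0 <= k s) -> 0 <= sum_f_R0 k m.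
Proof. intros H. rewrite <- (sum_eq_R0 (fun _ => 0) m) by auto. apply sum_Rle; auto. Qed.

Lemma core {X1 X2} (x1 : X1) (x2 : X2) (D1 : (X1 -> R) -> Prop) (D2 : (X2 -> R) -> Prop)
  (HD1 : cone_ok D1) (HD2 : cone_ok D2) (F : X1 -> R) (H : X2 -> R)
  (HF : is_gamble F) (HH : is_gamble H) eps (He : 0 < eps)
  (NF : ~ D1 (fun a => F a + eps)) (NH : ~ D2 (fun b => H b + eps))
  (LU : list ((X2 -> R) * (X1 -> Prop))) (LV : list ((X1 -> R) * (X2 -> Prop)))
  (HU : forall p, In p LU -> D2 (fst p)) (HV : forall p, In p LV -> D1 (fst p))
  (Hin : forall a b, sumL LU (fun p => fst p b * indic (snd p) a) +
                     sumL LV (fun p => fst p a * indic (snd p) b) <= F a + H b) : False.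
Proof.
  destruct (reps x1 (map snd LU)) as [R1 HR1].
  destruct (reps x2 (map snd LV)) as [R2 HR2].
  set (sim1 := fun a r => forall E, In E (map snd LU) -> (E a <-> E r)).
  set (sim2 := fun b q => forall E, In E (map snd LV) -> (E b <-> E q)).
  set (U := fun r b => sumL LU (fun p => fst p b * indic (snd p) r)).
  set (V := fun q a => sumL LV (fun p => fst p a * indic (snd p) q)).
  assert (Key : forall a b r q, sim1 a r -> sim2 b q -> U r b + V q a <= F a + H b).
  { intros a b r q Ha Hb. specialize (Hin a b). unfold U, V.
    rewrite (sumL_ext_in LU (fun p => fst p b * indic (snd p) r) (fun p => fst p b * indic (snd p) a)).
    rewrite (sumL_ext_in LV (fun p => fst p a * indic (snd p) q) (fun p => fst p a * indic (snd p) b)).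
    auto.
    - intros p Hp. f_equal. apply indic_iff. symmetry. apply Hb. apply in_map; auto.
    - intros p Hp. f_equal. apply indic_iff. symmetry. apply Ha. apply in_map; auto. }
  assert (cval : forall r q, {c | (forall a, sim1 a r -> c <= F a - V q a) /\
                                  (forall b, sim2 b q -> U r b - H b <= c)}).
  { intros r q.
    set (E := fun y => exists b, sim2 b q /\ y = U r b - H b).
    assert (Hb : bound E).
    { exists (F r - V q r). intros y [b [Hb ->]]. pose proof (Key r b r q (fun _ _ => iff_refl _) Hb). lra. }
    assert (Hne : exists y, E y).
    { exists (U r q - H q). exists q. split; [intros E0 _; tauto|reflexivity]. }
    destruct (completeness E Hb Hne) as [l [Hl1 Hl2]].
    exists l. split.
    - intros a Ha. apply Hl2. intros y [b [Hb' ->]]. pose proof (Key a b r q Ha Hb'). lra.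
    - intros b Hb'. apply Hl1. exists b; auto. }
  set (m := pred (length R1)).
  set (rr := fun s => nth s R1 x1).
  assert (Hrow : forall a, exists s, (s <= m)%nat /\ sim1 a (rr s)).
  { intros a. destruct (HR1 a) as [r [Hr1 Hr2]]. destruct (In_nth R1 r x1 Hr1) as [s [Hs1 Hs2]].
    exists s. split; [unfold m; lia|]. unfold rr; rewrite Hs2. exact Hr2. }
  set (L := map (fun q => fun s => proj1_sig (cval (rr s) q)) R2).
  set (K := fun w : nat -> R => exists alpha Phi, 0 < alpha /\ D0 D1 Phi /\
              forall s, (s <= m)%nat -> forall a, sim1 a (rr s) -> w s <= alpha * F a - Phi a).
  destruct (alt m K L) as [[w [[alpha [Phi [Ha [HPhi Hw]]]] Hw0]]|[k [Hk1 Hk2]]].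
  - intros a b w w' Ha Hb [al [Ph [Hal [HPh Hw]]]] [al' [Ph' [Hal' [HPh' Hw']]]].
    exists (a * al + b * al'), (fun x => a * Ph x + b * Ph' x). split; [|split].
    + pose proof (Rmult_le_pos _ _ Ha (Rlt_le _ _ Hal)). pose proof (Rmult_lt_0_compat _ _ Hb Hal'). lra.
    + apply D0_add; auto; apply D0_scale; auto; lra.
    + intros s Hs x Hx. specialize (Hw s Hs x Hx). specialize (Hw' s Hs x Hx).
      apply (Rmult_le_compat_l a) in Hw; auto. apply (Rmult_le_compat_l b) in Hw'; [|lra].
      replace ((a * al + b * al') * F x - (a * Ph x + b * Ph' x)) with
        (a * (al * F x - Ph x) + b * (al' * F x - Ph' x)) by ring. lra.
  - intros w Hw. unfold L in Hw. apply in_map_iff in Hw. destruct Hw as [q [<- Hq]].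
    exists 1, (V q). split; [lra|split].
    + apply sumL_D0; auto.
    + intros s Hs a Ha. destruct (cval (rr s) q) as [c [Hc1 Hc2]]. simpl.
      specialize (Hc1 a Ha). lra.
  - unfold L. destruct (HR2 x2) as [q [Hq _]]. destruct R2; [destruct Hq|discriminate].
  - apply NF. apply (D_upper D1 HD1 x1 F Phi alpha eps); auto.
    intros a. destruct (Hrow a) as [s [Hs Has]]. specialize (Hw s Hs a Has). specialize (Hw0 s Hs). lra.
  - set (Psi := fun b => sum_f_R0 (fun s => k s * U (rr s) b) m).
    set (Kt := sum_f_R0 k m).
    assert (HPsi : D0 D2 Psi).
    { apply (D0_sum D2 HD2 (fun s => U (rr s)) k m). intros s Hs. split; auto.
      apply sumL_D0; auto. }
    assert (Hlt : forall b, Psi b - Kt * H b < 0).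
    { intros b. destruct (HR2 b) as [q [Hq1 Hq2]].
      assert (Hwq := Hk2 (fun s => proj1_sig (cval (rr s) q))
                     (in_map (fun q => fun s => proj1_sig (cval (rr s) q)) R2 q Hq1)).
      unfold vsum in Hwq.
      assert (Hle : sum_f_R0 (fun s => k s * (U (rr s) b - H b)) m <=
                    sum_f_R0 (fun s => k s * proj1_sig (cval (rr s) q)) m).
      { apply sum_Rle. intros s Hs. apply Rmult_le_compat_l; auto.
        destruct (cval (rr s) q) as [c [Hc1 Hc2]]. simpl. apply Hc2. exact Hq2. }
      rewrite sum_sub in Hle. unfold Psi, Kt. lra. }
    assert (HKt : 0 <= Kt) by (apply sum_nonneg; auto).
    destruct (Rle_lt_dec Kt 0) as [HK0|HK0].
    + assert (Kt = 0) by lra.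
      destruct HPsi as [HPsi|HPsi].
      * apply (c_np _ HD2 Psi); auto. intros b; specialize (Hlt b). rewrite H0 in Hlt. lra.
      * specialize (Hlt x2). rewrite HPsi, H0 in Hlt. lra.
    + apply NH. apply (D_upper D2 HD2 x2 H Psi Kt eps); auto.
      intros b; specialize (Hlt b); lra.
Qed.

Lemma lowprev_full {X} (D : (X -> R) -> Prop) f :
  lowprev_of D f fullset = Lub_Rbar (fun mu => D (fun x => f x - mu)).
Proof.
  unfold lowprev_of; apply Lub_Rbar_eqset; intros mu; split; intros H; eapply D_ext; eauto;
  intros; cbv beta; rewrite indic_full; ring.
Qed.

Lemma lub_fin (E : R -> Prop) l : (exists x, E x) -> is_lub E l -> Lub_Rbar E = Finite l.
Proof.
  intros [x0 Hx0] [H1 H2]. apply is_lub_Rbar_unique. split.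
  - intros x Hx. simpl. apply H1; auto.
  - intros b Hb. destruct b as [b| |].
    + simpl. apply H2. intros x Hx. specialize (Hb x Hx). simpl in Hb. auto.
    + simpl. exact I.
    + specialize (Hb x0 Hx0). simpl in Hb. destruct Hb.
Qed.

Lemma abs_bnd x M : Rabs x <= M -> -M <= x <= M.
Proof. intros H. pose proof (Rle_abs x). pose proof (Rle_abs (-x)). rewrite Rabs_Ropp in *. lra. Qed.

Lemma marg {X} (x0 : X) (D : (X -> R) -> Prop) (HD : cone_ok D) f : is_gamble f ->
  exists l, is_lub (fun a => D (fun x => f x - a)) l /\ exists a, D (fun x => f x - a).
Proof.
  intros [M HM].
  assert (Hne : exists a, D (fun x => f x - a)).
  { exists (-M-1). apply c_pos; auto. split; [|split].
    - apply gamble_add; [exists M; auto|apply gamble_const].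
    - intros x. specialize (HM x). apply abs_bnd in HM. lra.
    - exists x0. specialize (HM x0). apply abs_bnd in HM. lra. }
  assert (Hb : bound (fun a => D (fun x => f x - a))).
  { exists M. intros a Ha. destruct (Rle_dec a M); auto. exfalso.
    refine (c_np _ HD _ _ Ha). intros x. cbv beta. specialize (HM x). apply abs_bnd in HM. lra. }
  destruct (completeness _ Hb Hne) as [l Hl]. exists l; split; auto.
Qed.

Lemma mk_prod {X1 X2} Bs1 Bs2 (D1 : (X1 -> R) -> Prop) (D2 : (X2 -> R) -> Prop) f h a c :
  D1 (fun x => f x - a) -> D2 (fun y => h y - c) ->
  Dprod Bs1 Bs2 D1 D2 (fun z => f (fst z) + h (snd z) - (a + c)).
Proof.
  intros H1 H2. exists 1%nat, (fun _ => 1),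
    (fun i => if Nat.eqb i 0 then (fun z => (fun x => f x - a) (fst z) * indic fullset (snd z))
              else (fun z => (fun y => h y - c) (snd z) * indic fullset (fst z))).
  split.
  - intros i Hi. split; [lra|]. left. destruct (Nat.eqb i 0).
    + right. exists (fun x => f x - a), fullset. split; auto. split; auto. right; intros; exact I.
    + left. exists (fun y => h y - c), fullset. split; auto. split; auto. right; intros; exact I.
  - intros z. simpl. rewrite !indic_full. ring.
Qed.

Theorem corollary23 (X1 X2 : Type) (x1 : X1) (x2 : X2)
  (Bs1 : (X1 -> Prop) -> Prop) (Bs2 : (X2 -> Prop) -> Prop)
  (hBs1 : forall B, Bs1 B -> exists x, B x)
  (hBs2 : forall B, Bs2 B -> exists x, B x)
  (C1 : (X1 -> R) -> (X1 -> Prop) -> Prop) (P1 : (X1 -> R) -> (X1 -> Prop) -> Rbar)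
  (C2 : (X2 -> R) -> (X2 -> Prop) -> Prop) (P2 : (X2 -> R) -> (X2 -> Prop) -> Rbar)
  (hC1 : domain_ok C1) (hC2 : domain_ok C2)
  (hP1 : coherent_P C1 P1) (hP2 : coherent_P C2 P2)
  (f : X1 -> R) (h : X2 -> R) (hf : is_gamble f) (hh : is_gamble h) :
  prodP Bs1 Bs2 C1 P1 C2 P2 (fun z => (f (fst z) + h (snd z))%R) fullset =
  Rbar_plus (natext C1 P1 f fullset) (natext C2 P2 h fullset).
Proof.
  pose proof (ExtP_cone C1 P1 hC1 hP1) as HD1.
  pose proof (ExtP_cone C2 P2 hC2 hP2) as HD2.
  set (D1 := ExtP C1 P1) in *. set (D2 := ExtP C2 P2) in *.
  unfold natext, prodP. fold D1 D2. rewrite !lowprev_full.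
  destruct (marg x1 D1 HD1 f hf) as [l1 [[Hl1a Hl1b] [a0 Ha0]]].
  destruct (marg x2 D2 HD2 h hh) as [l2 [[Hl2a Hl2b] [b0 Hb0]]].
  rewrite (lub_fin (fun a => D1 (fun x => f x - a)) l1) by (eauto; split; auto).
  rewrite (lub_fin (fun a => D2 (fun x => h x - a)) l2) by (eauto; split; auto).
  simpl. apply lub_fin.
  { exists (a0 + b0). apply (D_ext _ (fun z => f (fst z) + h (snd z) - (a0 + b0))); [|intros; ring].
    apply mk_prod; auto. }
  split.
  - intros mu Hmu. destruct (Rle_dec mu (l1 + l2)) as [|Hgt]; auto. exfalso.
    set (d := (mu - l1 - l2) / 2).
    assert (Hd : 0 < d) by (unfold d; lra).
    destruct (decomp Bs1 Bs2 D1 D2 (c_scale _ HD1) (c_scale _ HD2) _ Hmu) as [LU [LV [HU [HV Hin]]]].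
    refine (core x1 x2 D1 D2 HD1 HD2 (fun a => f a - (l1 + d)) (fun b => h b - (l2 + d))
                _ _ (d/2) ltac:(lra) _ _ LU LV HU HV _).
    + apply (gamble_ext (fun x => f x + (-(l1+d)))); [apply gamble_add; auto; apply gamble_const|intros; cbv beta; ring].
    + apply (gamble_ext (fun x => h x + (-(l2+d)))); [apply gamble_add; auto; apply gamble_const|intros; cbv beta; ring].
    + intros HF. assert (Hc : D1 (fun x => f x - (l1 + d/2))).
      { eapply D_ext; [exact HF|]. intros x. cbv beta. lra. }
      specialize (Hl1a _ Hc). lra.
    + intros HH. assert (Hc : D2 (fun x => h x - (l2 + d/2))) by (eapply D_ext; [exact HH|intros; cbv beta; lra]).
      specialize (Hl2a _ Hc). lra.
    + intros a b. specialize (Hin (a, b)). simpl in Hin. unfold d in *. lra.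
  - intros b Hb.
    assert (Hsum : forall a c, D1 (fun x => f x - a) -> D2 (fun y => h y - c) -> a + c <= b).
    { intros a c Ha Hc. apply Hb.
      apply (D_ext _ (fun z => f (fst z) + h (snd z) - (a + c))); [|intros; ring].
      apply mk_prod; auto. }
    assert (l2 <= b - l1).
    { apply Hl2b. intros c Hc. cut (l1 <= b - c); [lra|]. apply Hl1b. intros a Ha.
      specialize (Hsum a c Ha Hc). lra. }
    lra.
Qed.
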